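(* Let $X_j=[C_j-\frac{R_j}{2},\,C_j+\frac{R_j}{2}]$, $j=1,2$, be interval-valued random variables with centers $C_j$ and ranges $R_j$ such that the symbolic correlation $\mathrm{Cor}_k(X_1,X_2)=\frac{\mathrm{Cov}_k(X_1,X_2)}{\sqrt{\mathrm{Var}_k(X_1)\mathrm{Var}_k(X_2)}}$ exists, and let $\omega_1,\omega_2\in\mathbb R$ with $\omega_1\ne0$. Then: (1) For $k=1,2,3$, $\mathrm{Cor}_k(X_1,X_1)=1$. For $k=4,5$, $\mathrm{Cor}_k(X_1,X_1)=1$ if and only if $P(R_1=0)=1$. (2) $\mathrm{Cor}_k(X_1,\omega_1X_2+\omega_2)=\mathrm{sgn}(\omega_1)\,\mathrm{Cor}_k(X_1,X_2)$ for $k=1,4,5$, and $\mathrm{Cor}_k(X_1,\omega_1X_2+\omega_2)=\mathrm{Cor}_k(X_1,X_2)$ for $k=2,3$ when $\omega_1>0$, where $\mathrm{sgn}(x)=1$ for $x>0$, $-1$ for $x<0$, $0$ for $x=0$. Moreover, when $\omega_1<0$, $\mathrm{Cor}_k(X_1,\omega_1X_2+\omega_2)\ne-\mathrm{Cor}_k(X_1,X_2)$ for $k=2,3$.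
   Context: An interval-valued random variable is $X=[A,B]$ with $A,B$ real random variables and $P(A\le B)=1$; center $C=(A+B)/2$, range $R=B-A$. Interval arithmetic: $\omega_1X_2+\omega_2$ is the interval-valued random variable with center $\omega_1C_2+\omega_2$ and range $|\omega_1|R_2$. Let $\delta_1=0$, $\delta_2=\delta_4=1/4$, $\delta_3=\delta_5=1/12$. Symbolic variances: $\mathrm{Var}_k(X)=\mathrm{Var}(C)+\delta_k\mathrm{E}(R^2)$, $k=1,\dots,5$. Symbolic covariances of interval-valued random variables $Y,Z$ with centers $C_Y,C_Z$ and ranges $R_Y,R_Z$: $\mathrm{Cov}_k(Y,Z)=\mathrm{Cov}(C_Y,C_Z)+\delta_k\mathrm{E}(R_YR_Z)$ for $k=1,2,3$ and $\mathrm{Cov}_k(Y,Z)=\mathrm{Cov}(C_Y,C_Z)$ for $k=4,5$ (also when $Y=Z$). Symbolic correlation: $\mathrm{Cor}_k(Y,Z)=\mathrm{Cov}_k(Y,Z)/\sqrt{\mathrm{Var}_k(Y)\mathrm{Var}_k(Z)}$; existence means the relevant moments are finite and the variances in the denominator are positive.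
   Formalization: For k=2,3 and ω₁<0, the inequality Cor_k(X₁,ω₁X₂+ω₂) ≠ −Cor_k(X₁,X₂) is claimed only under the extra hypothesis E(R₁R₂) ≠ 0. The statement above fails without it. *)

(* Defs.v *)
From HB Require Import structures.
From mathcomp Require Import all_boot all_order all_algebra.
From mathcomp Require Import all_classical all_reals all_analysis.
Set Implicit Arguments. Unset Strict Implicit. Unset Printing Implicit Defensive.
Import Order.TTheory GRing.Theory Num.Theory.
Local Open Scope classical_set_scope.
Local Open Scope ring_scope.

Section IntervalRV.
Context {d : measure_display} {T : measurableType d} {R : realType}
  (P : probability T R).

(* An interval-valued random variable X = [A, B] is represented by the pair
   (A, B) of real functions on the sample space. *)
Definition is_ivrv (X : (T -> R) * (T -> R)) : Prop :=
  [/\ measurable_fun setT X.1, measurable_fun setT X.2 &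
      P [set w | X.1 w <= X.2 w] = 1%E].

Definition ivC (X : (T -> R) * (T -> R)) : T -> R := fun w => (X.1 w + X.2 w) / 2.
Definition ivR (X : (T -> R) * (T -> R)) : T -> R := fun w => X.2 w - X.1 w.

Definition ivaff (w1 w2 : R) (X : (T -> R) * (T -> R)) : (T -> R) * (T -> R) :=
  (fun w => w1 * ivC X w + w2 - `|w1| * ivR X w / 2,
   fun w => w1 * ivC X w + w2 + `|w1| * ivR X w / 2).

Definition delta (k : nat) : R :=
  match k with
  | 2 | 4 => 1 / 4
  | 3 | 5 => 1 / 12
  | _ => 0
  end.

Definition sVar (k : nat) (X : (T -> R) * (T -> R)) : R :=
  fine (covariance P (ivC X) (ivC X)) +
  delta k * fine ('E_P[(fun w => (ivR X w ^+ 2)%R)]).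

Definition sCov (k : nat) (Y Z : (T -> R) * (T -> R)) : R :=
  fine (covariance P (ivC Y) (ivC Z)) +
  (if (k <= 3)%N then delta k * fine ('E_P[(fun w => (ivR Y w * ivR Z w)%R)])
   else 0).

Definition sCor (k : nat) (Y Z : (T -> R) * (T -> R)) : R :=
  sCov k Y Z / Num.sqrt (sVar k Y * sVar k Z).

(* existence of Cor_k(Y, Z): the relevant moments are finite (centers and
   ranges square-integrable) and the variances in the denominator are positive *)
Definition sCor_exists (k : nat) (Y Z : (T -> R) * (T -> R)) : Prop :=
  [/\ ivC Y \in Lfun P 2, ivC Z \in Lfun P 2,
      ivR Y \in Lfun P 2 & ivR Z \in Lfun P 2] /\
  (0 < sVar k Y /\ 0 < sVar k Z).

End IntervalRV.

(* Main.v *)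
Require Import Defs.
From HB Require Import structures.
From mathcomp Require Import all_boot all_order all_algebra.
From mathcomp Require Import all_classical all_reals all_analysis.
From mathcomp Require Import ring lra zify measurable_realfun.
Import Order.TTheory GRing.Theory Num.Theory.
Local Open Scope classical_set_scope.
Local Open Scope ring_scope.

Section H.
Context d (T : measurableType d) (R : realType) (P : probability T R).

Lemma L2E (f : T -> R) : f \in Lfun P 2 -> f \in Lfun P 2%:E.
Proof. by []. Qed.

Lemma L21 {f : T -> R} : f \in Lfun P 2%:E -> f \in Lfun P 1.
Proof. by apply: Lfun_subset12; exact: fin_num_measure. Qed.

Lemma ivC_aff (w1 w2 : R) (X : (T -> R) * (T -> R)) : ivC (ivaff w1 w2 X) = (fun w => w1 * ivC X w + w2).
Proof.
have h : forall a b : R, (a - b + (a + b)) / 2 = a by move=> a b; lra.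
by apply/funext => w; rewrite /ivC /ivaff /= h.
Qed.

Lemma ivR_aff (w1 w2 : R) (X : (T -> R) * (T -> R)) : ivR (ivaff w1 w2 X) = (fun w => `|w1| * ivR X w).
Proof.
have h : forall a b : R, (a + b / 2) - (a - b / 2) = b by move=> a b; lra.
by apply/funext => w; rewrite /ivR /ivaff /= h.
Qed.

Lemma cov_affr {X Y : T -> R} (a b : R) : X \in Lfun P 2%:E -> Y \in Lfun P 2%:E ->
  fine (covariance P X (fun w => a * Y w + b)) = a * fine (covariance P X Y).
Proof.
move=> X2 Y2.
have -> : (fun w => a * Y w + b) = ((a \o* Y) \+ cst b)%R.
  by apply/funext => w /=; rewrite mulrC.
rewrite covarianceDr ?Lfun_cst ?Lfun_scale ?ler1n //.
have XY1 := Lfun2_mul_Lfun1 X2 Y2; have X1 := L21 X2; have Y1 := L21 Y2.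
rewrite covariance_cst_r adde0 covarianceZr //.
by rewrite fineM // covariance_fin_num.
Qed.

Lemma cov_affl {X Y : T -> R} (a b : R) : X \in Lfun P 2%:E -> Y \in Lfun P 2%:E ->
  fine (covariance P (fun w => a * Y w + b) X) = a * fine (covariance P Y X).
Proof. by move=> X2 Y2; rewrite covarianceC cov_affr // covarianceC. Qed.

Lemma Y_aff_L2 {Y : T -> R} (a b : R) : Y \in Lfun P 2%:E ->
  (fun w => a * Y w + b) \in Lfun P 2%:E.
Proof.
move=> Y2.
have -> : (fun w => a * Y w + b) = ((a \o* Y) \+ cst b)%R.
  by apply/funext => w /=; rewrite mulrC.
apply: rpredD; first by rewrite lee1n.
- by move=> ?; apply: Lfun_scale; rewrite ?ler1n.
- by move=> ?; exact: Lfun_cst.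
Qed.

Lemma var_aff (Y : T -> R) a b : Y \in Lfun P 2%:E ->
  fine (covariance P (fun w => a * Y w + b) (fun w => a * Y w + b)) =
  a ^+ 2 * fine (covariance P Y Y).
Proof.
move=> Y2; have Z2 := Y_aff_L2 a b Y2.
rewrite (cov_affr a b Z2 Y2) (cov_affl a b Y2 Y2).
by rewrite mulrA -expr2.
Qed.

Lemma E_scale (f : T -> R) (a : R) : f \in Lfun P 1 ->
  fine ('E_P[(fun w => (a * f w)%R)])%E = a * fine ('E_P[f])%E.
Proof.
move=> f1.
have -> : (fun w => a * f w) = (a \o* f)%R by apply/funext => w /=; rewrite mulrC.
by rewrite expectationZl // fineM // expectation_fin_num.
Qed.

Lemma E_sqr0 (f : T -> R) : measurable_fun setT f ->
  ('E_P[(fun w => (f w ^+ 2)%R)] = 0)%E <-> P [set w | f w = 0] = 1%E.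
Proof.
move=> mf.
have mA : measurable [set w | f w = 0].
  by rewrite -[X in measurable X]setTI; exact: (mf measurableT [set 0%R] (measurable_set1 _)).
rewrite unlock.
have -> : (\int[P]_w ((f w ^+ 2)%:E))%E = (\int[P]_w `|(f w ^+ 2)%:E|)%E.
  by apply: eq_integral => w _; rewrite gee0_abs // lee_fin sqr_ge0.
rewrite ae_eq_integral_abs //; last first.
  by apply/measurable_EFinP; exact: measurable_funX.
split.
- move=> [N [mN N0 sN]].
  have : P (~` [set w | f w = 0]) = 0%E.
    apply/eqP; rewrite -measure_le0 -N0 le_measure ?inE //; first exact: measurableC.
    move=> w /= fw; apply: sN => /= H; apply: fw.
    by move: (H I) => /= [] /eqP; rewrite sqrf_eq0 => /eqP.
  rewrite probability_setC // => h.
  have fin : P [set w | f w = 0] \is a fin_num := fin_num_measure P _ mA.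
  rewrite -(fineK fin) in h *; move: h; rewrite -EFinB => -[h]; congr EFin; lra.
- move=> PA; exists (~` [set w | f w = 0]); split.
  + exact: measurableC.
  + by have := probability_setC P mA; rewrite PA subee.
  + by move=> w /= H fw; apply: H => _; rewrite fw expr0n.
Qed.

End H.

Theorem theorem2p3 (d : measure_display) (T : measurableType d) (R : realType)
  (P : probability T R) (X1 X2 : (T -> R) * (T -> R)) (w1 w2 : R) (k : nat) :
  is_ivrv P X1 -> is_ivrv P X2 -> (1 <= k <= 5)%N ->
  sCor_exists P k X1 X2 -> w1 != 0 ->
  [/\ (k <= 3)%N -> sCor P k X1 X1 = 1,
      (4 <= k)%N -> (sCor P k X1 X1 = 1 <-> P [set w | ivR X1 w = 0] = 1%E),
      [|| k == 1%N, k == 4%N | k == 5%N] ->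
        sCor P k X1 (ivaff w1 w2 X2) = Num.sg w1 * sCor P k X1 X2,
      (k == 2%N) || (k == 3%N) -> 0 < w1 ->
        sCor P k X1 (ivaff w1 w2 X2) = sCor P k X1 X2 &
      (k == 2%N) || (k == 3%N) -> w1 < 0 ->
        ('E_P[(fun w => (ivR X1 w * ivR X2 w)%R)] != 0)%E ->
        sCor P k X1 (ivaff w1 w2 X2) != - sCor P k X1 X2].
Proof.
move=> [mA1 mB1 _] iv2 /andP[k1 k5] [[C1L C2L R1L R2L] [V1 V2]] w10.
have C12 : ivC X1 \in Lfun P 2%:E := C1L.
have C22 : ivC X2 \in Lfun P 2%:E := C2L.
have R12 : ivR X1 \in Lfun P 2%:E := R1L.
have R22 : ivR X2 \in Lfun P 2%:E := R2L.
have R11 := Lfun2_mul_Lfun1 R12 R12.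
have R221 := Lfun2_mul_Lfun1 R22 R22.
have R121 := Lfun2_mul_Lfun1 R12 R22.
have sq1 : (fun w => ivR X1 w ^+ 2) = (ivR X1 \* ivR X1)%R.
  by apply/funext => w; rewrite /= expr2.
have sq2 : (fun w => ivR X2 w ^+ 2) = (ivR X2 \* ivR X2)%R.
  by apply/funext => w; rewrite /= expr2.
have hvaff : sVar P k (ivaff w1 w2 X2) = w1 ^+ 2 * sVar P k X2.
  rewrite /sVar ivC_aff ivR_aff var_aff //.
  have -> : (fun w => (`|w1| * ivR X2 w) ^+ 2) = (fun w => w1 ^+ 2 * (ivR X2 \* ivR X2) w).
    by apply/funext => w; rewrite /= exprMn real_normK ?num_real // expr2.
  rewrite E_scale // sq2; ring.
have hcaff : sCov P k X1 (ivaff w1 w2 X2) = w1 * fine (covariance P (ivC X1) (ivC X2)) +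
    (if (k <= 3)%N then delta k * (`|w1| * fine ('E_P[(fun w => (ivR X1 w * ivR X2 w)%R)])%E) else 0).
  rewrite /sCov ivC_aff ivR_aff cov_affr //.
  have -> : (fun w => ivR X1 w * (`|w1| * ivR X2 w)) = (fun w => `|w1| * (ivR X1 \* ivR X2) w).
    by apply/funext => w; rewrite /= mulrCA.
  by rewrite E_scale.
have hcov12 : sCov P k X1 X2 = fine (covariance P (ivC X1) (ivC X2)) +
    (if (k <= 3)%N then delta k * fine ('E_P[(fun w => (ivR X1 w * ivR X2 w)%R)])%E else 0).
  by [].
have hsq : Num.sqrt (sVar P k X1 * sVar P k (ivaff w1 w2 X2)) =
    `|w1| * Num.sqrt (sVar P k X1 * sVar P k X2).
  by rewrite hvaff mulrCA sqrtrM ?sqrtr_sqr // exprn_even_ge0.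
have s0 : 0 < Num.sqrt (sVar P k X1 * sVar P k X2) by rewrite sqrtr_gt0 mulr_gt0.
have w1n : `|w1| != 0 by rewrite normr_eq0.
have sqa : Num.sqrt (sVar P k X1 * sVar P k X1) = sVar P k X1.
  by rewrite -expr2 sqrtr_sqr gtr0_norm.
have E11 : (fun w => ivR X1 w * ivR X1 w) = (fun w => ivR X1 w ^+ 2).
  by apply/funext => w; rewrite expr2.
have dk0 : (2 <= k)%N -> delta k != 0 :> R.
  move=> k2; have : k = 2%N \/ k = 3%N \/ k = 4%N \/ k = 5%N by lia.
  by case=> [->|[->|[->|->]]]; rewrite /delta; apply/lt0r_neq0; lra.
split.
- move=> k3; rewrite /sCor sqa /sCov k3 E11.
  by rewrite -/(sVar P k X1) divff // lt0r_neq0.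
- move=> k4; rewrite /sCor sqa /sCov ifF; last by apply/negbTE; rewrite -ltnNge.
  have mR1 : measurable_fun setT (ivR X1) by apply: measurable_funB.
  rewrite -(@E_sqr0 _ _ _ P _ mR1).
  have fin2 : ('E_P[(fun w => (ivR X1 w ^+ 2)%R)])%E \is a fin_num.
    by rewrite sq1 expectation_fin_num.
  have dn : delta k != 0 :> R by apply: dk0; exact: (leq_trans _ k4).
  move: V1; rewrite /sVar addr0.
  set v := fine _; set e2 := fine _ => V1.
  split.
  + move/(congr1 ( *%R^~ (v + delta k * e2))); rewrite mul1r divfK ?lt0r_neq0 //.
    move/eqP; rewrite -subr_eq0 opprD addrA subrr add0r oppr_eq0 mulf_eq0 (negbTE dn) /=.
    by move/eqP => e20; rewrite -(fineK fin2) -/e2 e20.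
  + move=> E0; rewrite /e2 E0 /= mulr0 addr0 divff //.
    by move: V1; rewrite /e2 E0 /= mulr0 addr0 => /lt0r_neq0.
- move=> hk.
  have hz : forall x : R, (if (k <= 3)%N then delta k * x else 0) = 0.
    move=> x; case/or3P: hk => /eqP -> //=; by rewrite /delta mul0r.
  rewrite /sCor hsq hcaff hcov12 !hz !addr0.
  rewrite {1}(numEsg w1); field.
  by rewrite w1n lt0r_neq0.
- move=> hk w1p.
  have k3 : (k <= 3)%N by case/orP: hk => /eqP ->.
  rewrite /sCor hsq hcaff hcov12 k3 gtr0_norm //; field.
  by rewrite lt0r_neq0 // lt0r_neq0.
- move=> hk w1n0 En.
  have k3 : (k <= 3)%N by case/orP: hk => /eqP ->.
  have dn := dk0 ltac:(by case/orP: hk => /eqP ->).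
  have fin : ('E_P[(fun w => (ivR X1 w * ivR X2 w)%R)])%E \is a fin_num.
    exact: expectation_fin_num.
  rewrite /sCor hsq hcaff hcov12 k3 ltr0_norm //.
  set s := Num.sqrt _; set v := fine (covariance _ _ _); set e := fine _.
  apply/negP => /eqP h.
  have h2 : 2 * delta k * e / s = 0.
    rewrite -[RHS](subrr (- ((v + delta k * e) / s))) -[X in X - _]h.
    field; by rewrite lt0r_neq0 // gt_eqF.
  have sn : s != 0 by rewrite /s gt_eqF.
  have e0 : e = 0.
    have -> : e = (2 * delta k * e / s) * s / (2 * delta k).
      field; rewrite ?sn ?dn //=; apply/andP; split => //; lra.
    by rewrite h2 !mul0r.
  move/negP: En; apply; apply/eqP.
  by rewrite -(fineK fin) -/e e0.
Qed.
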